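(* For every odd integer $m\geq 3$, there exists a latin square of order $n=3m$ which is composed of nine subsquares of order $m$ (i.e. when its rows and columns are each split into three consecutive blocks of $m$, each of the nine resulting $m\times m$ blocks is itself a latin square on $m$ symbols), such that every transversal of it contains at least one entry from each of these nine subsquares.
   Context: A latin square of order $n$ is an $n\times n$ array on $n$ symbols in which each symbol occurs exactly once in each row and each column; it is viewed as the set of its $n^2$ entries $(r,c,s)$. A transversal is a set of $n$ entries containing each row, each column and each symbol exactly once. *)

(* Defs.v *)
From mathcomp Require Import all_boot.
Set Implicit Arguments. Unset Strict Implicit. Unset Printing Implicit Defensive.

Definition latin_square (n : nat) (L : 'I_n -> 'I_n -> 'I_n) : Prop :=
  (forall r, injective (L r)) /\ (forall c, injective (fun r => L r c)).

Definition in_block (m n : nat) (a b : nat) (rc : 'I_n * 'I_n) : bool :=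
  (rc.1 %/ m == a) && (rc.2 %/ m == b).

Definition block_subsquare (m n : nat) (L : 'I_n -> 'I_n -> 'I_n) (a b : nat) : Prop :=
  #|[set L rc.1 rc.2 | rc in [set rc : 'I_n * 'I_n | in_block m a b rc]]| = m /\
  forall s : 'I_n,
    (exists rc : 'I_n * 'I_n, in_block m a b rc && (L rc.1 rc.2 == s)) ->
    (forall r : 'I_n, r %/ m = a -> exists c : 'I_n, (c %/ m == b) && (L r c == s)) /\
    (forall c : 'I_n, c %/ m = b -> exists r : 'I_n, (r %/ m == a) && (L r c == s)).

Definition latin_transversal (n : nat) (L : 'I_n -> 'I_n -> 'I_n) (T : {set 'I_n * 'I_n}) : Prop :=
  #|T| = n /\
  (forall r : 'I_n, exists! c : 'I_n, (r, c) \in T) /\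
  (forall c : 'I_n, exists! r : 'I_n, (r, c) \in T) /\
  (forall s : 'I_n, exists! rc : 'I_n * 'I_n, (rc \in T) && (L rc.1 rc.2 == s)).

(* Main.v *)
Require Import Defs.
From mathcomp Require Import all_boot.
From mathcomp Require Import zify.
Set Implicit Arguments. Unset Strict Implicit. Unset Printing Implicit Defensive.

Lemma sum_decomp (m : nat) (F : nat -> nat) :
  \sum_(v < 3 * m) F v = \sum_(K < 3) \sum_(t < m) F (K * m + t).
Proof.
rewrite -(big_mkord xpredT F) big_nat_mul big_mkord; apply: eq_bigr => K _.
rewrite -{1}(add0n (K * m)) big_addn.
have -> : K.+1 * m - K * m = m by rewrite mulSn addnK.
by rewrite big_mkord; apply: eq_bigr => t _; rewrite addnC.
Qed.

Lemma sum3 (F : nat -> nat) : \sum_(K < 3) F K = F 0 + F 1 + F 2.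
Proof. by rewrite !big_ord_recr big_ord0 /=. Qed.

Lemma sum_eq1 (m x : nat) : x < m -> \sum_(t < m) ((t : nat) == x) = 1.
Proof.
move=> xm; rewrite (bigD1 (Ordinal xm)) //= eqxx big1 // => i /eqP hi.
by apply/eqP; rewrite eqb0; apply/eqP => e; apply: hi; apply: val_inj.
Qed.

Lemma sum_id_mod (m : nat) : odd m -> \sum_(t < m) t = 0 %[mod m].
Proof.
move=> om. have := bin2_sum m. rewrite big_mkord => ->.
rewrite bin2. have [k ->] : exists k, m = k.*2.+1.
  by exists m./2; rewrite -[LHS]odd_double_half om.
by rewrite [_.-1]/= -doubleMr doubleK modnMr mod0n.
Qed.

Definition xf (K : nat) : nat := K == 2.
Definition gsym (m a b t : nat) : nat :=
  if t == xf ((b + 2 * a) %% 3) then ((a + b) %% 3) * m + xf ((a + b) %% 3)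
  else ((b + 2 * a) %% 3) * m + t.
Definition isO (m v : nat) : bool := v %% m == xf (v %/ m).

Lemma divE m a t : t < m -> (a * m + t) %/ m = a.
Proof. move=> tm; rewrite divnMDl ?divn_small ?addn0 //; lia. Qed.
Lemma modE m a t : t < m -> (a * m + t) %% m = t.
Proof. by move=> tm; rewrite modnMDl modn_small. Qed.
Lemma xf_lt m K : 1 < m -> xf K < m.
Proof. by rewrite /xf; case: (K == 2) => /=; lia. Qed.

Lemma gsym_div m a b t : 1 < m -> t < m ->
  gsym m a b t %/ m = if t == xf ((b + 2 * a) %% 3) then (a + b) %% 3 else (b + 2 * a) %% 3.
Proof. by move=> m1 tm; rewrite /gsym; case: ifP => _; rewrite divE // xf_lt. Qed.
Lemma gsym_mod m a b t : 1 < m -> t < m ->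
  gsym m a b t %% m = if t == xf ((b + 2 * a) %% 3) then xf ((a + b) %% 3) else t.
Proof. by move=> m1 tm; rewrite /gsym; case: ifP => _; rewrite modE // xf_lt. Qed.

Lemma enc_lt m K u : K < 3 -> u < m -> K * m + u < 3 * m.
Proof.
move=> K3 um; apply: (@leq_trans (K.+1 * m)); first by rewrite mulSn addnC ltn_add2r.
by rewrite leq_mul2r K3 orbT.
Qed.

Lemma gsym_lt m a b t : 1 < m -> t < m -> gsym m a b t < 3 * m.
Proof.
move=> m1 tm; rewrite /gsym; case: ifP => _; apply: enc_lt => //; try by rewrite ltn_mod.
exact: xf_lt.
Qed.

Lemma isO_gsym m a b t : 1 < m -> t < m ->
  isO m (gsym m a b t) = (t == xf ((b + 2 * a) %% 3)).
Proof.
move=> m1 tm; rewrite /isO gsym_div // gsym_mod //.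
by case: (boolP (t == xf ((b + 2 * a) %% 3))) => H; rewrite ?eqxx //=; apply/negbTE.
Qed.

Lemma ginj_row m a b1 b2 t1 t2 : 1 < m -> a < 3 -> b1 < 3 -> b2 < 3 -> t1 < m -> t2 < m ->
  gsym m a b1 t1 = gsym m a b2 t2 -> b1 = b2 /\ t1 = t2.
Proof.
move=> m1 a3 b13 b23 t1m t2m E.
have D := congr1 (divn^~ m) E; have M := congr1 (modn^~ m) E.
rewrite /= !gsym_div ?gsym_mod // in D M.
move: D M; clear E; rewrite /xf.
case: a a3 => [|[|[|a]]] // _; case: b1 b13 => [|[|[|b1]]] // _;
  case: b2 b23 => [|[|[|b2]]] // _; rewrite /=.
all: do 2 (case: eqP => ?); lia.
Qed.

Lemma ginj_col m a1 a2 b t1 t2 : 1 < m -> a1 < 3 -> a2 < 3 -> b < 3 -> t1 < m -> t2 < m ->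
  gsym m a1 b t1 = gsym m a2 b t2 -> a1 = a2 /\ t1 = t2.
Proof.
move=> m1 a13 a23 b3 t1m t2m E.
have D := congr1 (divn^~ m) E; have M := congr1 (modn^~ m) E.
rewrite /= !gsym_div ?gsym_mod // in D M.
move: D M; clear E; rewrite /xf.
case: a1 a13 => [|[|[|a1]]] // _; case: a2 a23 => [|[|[|a2]]] // _;
  case: b b3 => [|[|[|b]]] // _; rewrite /=.
all: do 2 (case: eqP => ?); lia.
Qed.

Lemma sumc m c : \sum_(t < m) c = m * c.
Proof. by rewrite sum_nat_const card_ord. Qed.

Lemma sum_decomp2 m (F : nat -> nat -> nat) :
  \sum_(v < 3 * m) F (v %/ m) (v %% m) = \sum_(K < 3) \sum_(t < m) F K t.
Proof.
rewrite (sum_decomp m (fun v => F (v %/ m) (v %% m))).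
apply: eq_bigr => K _; apply: eq_bigr => t _.
by rewrite divE // modE.
Qed.

Lemma sum_T_fun (X Y : finType) (T : {set X}) (f : X -> Y) (G : Y -> nat) :
  (forall y, exists! x, (x \in T) && (f x == y)) ->
  \sum_(x in T) G (f x) = \sum_y G y.
Proof.
move=> U; rewrite (partition_big f xpredT) //=; apply: eq_bigr => y _.
have [x0 [H0 U0]] := U y.
rewrite (big_pred1 x0); first by move: H0 => /andP [_ /eqP ->].
move=> x /=; apply/idP/idP => [Hx|/eqP ->] //.
by rewrite (U0 x Hx).
Qed.

Lemma isO_enc m K t : 1 < m -> t < m -> isO m (K * m + t) = (t == xf K).
Proof. by move=> m1 tm; rewrite /isO divE // modE. Qed.

Lemma sum_ne1 m x : x < m -> \sum_(t < m) ((t : nat) != x) = m.-1.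
Proof.
move=> xm; have := sum_eq1 xm.
have : \sum_(t < m) (((t : nat) != x) + ((t : nat) == x)) = m.
  by rewrite -[RHS]muln1 -sumc; apply: eq_bigr => t _; case: eqP.
rewrite big_split /=; lia.
Qed.

Lemma s_a m a0 : a0 < 3 -> \sum_(v < 3 * m) (v %/ m == a0) = m.
Proof.
move=> a3; rewrite (sum_decomp2 m (fun K _ => (K == a0) : nat)).
rewrite !big_ord_recr big_ord0 /= !sumc; case: a0 a3 => [|[|[|]]] //= _; lia.
Qed.

Lemma s_b m : odd m -> \sum_(v < 3 * m) (v %% m) = 0 %[mod m].
Proof.
move=> om; rewrite (sum_decomp2 m (fun _ t => t)) !big_ord_recr big_ord0 /=.
have h : m %| \sum_(t < m) t by apply/eqP; rewrite sum_id_mod // mod0n.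
by rewrite mod0n; apply/eqP; change (m %| 0 + \sum_(t < m) t + \sum_(t < m) t + \sum_(t < m) t); rewrite !dvdn_add.
Qed.

Lemma s_c m : \sum_(v < 3 * m) (v %/ m) = 3 * m.
Proof. rewrite (sum_decomp2 m (fun K _ => K)) !big_ord_recr big_ord0 /= !sumc; lia. Qed.

Lemma s_d m : 1 < m -> \sum_(v < 3 * m) isO m v = 3.
Proof.
move=> m1; rewrite (sum_decomp2 m (fun K t => (t == xf K) : nat)) !big_ord_recr big_ord0 /=.
by rewrite !sum_eq1 // xf_lt.
Qed.

Lemma s_e m : 1 < m -> \sum_(v < 3 * m) isO m v * (v %/ m) = 3.
Proof.
move=> m1; rewrite (sum_decomp2 m (fun K t => (t == xf K) * K)) !big_ord_recr big_ord0 /=.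
by rewrite -!big_distrl /= !sum_eq1 // xf_lt.
Qed.

Lemma s_f m : 1 < m -> \sum_(v < 3 * m) isO m v * xf (v %/ m) = 1.
Proof.
move=> m1; rewrite (sum_decomp2 m (fun K t => (t == xf K) * xf K)) !big_ord_recr big_ord0 /=.
by rewrite -!big_distrl /= !sum_eq1 // xf_lt.
Qed.

Lemma s_g m c0 : 1 < m -> c0 < 3 ->
  \sum_(v < 3 * m) (~~ isO m v) * (v %/ m == c0) = m.-1.
Proof.
move=> m1 c3; rewrite (sum_decomp2 m (fun K t => (t != xf K) * (K == c0))) !big_ord_recr big_ord0 /=.
rewrite -!big_distrl /= !sum_ne1 ?xf_lt //.
case: c0 c3 => [|[|[|]]] //= _; lia.
Qed.

Lemma s_h m k0 : 1 < m -> k0 < 3 ->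
  \sum_(v < 3 * m) isO m v * (v %/ m == k0) = 1.
Proof.
move=> m1 c3; rewrite (sum_decomp2 m (fun K t => (t == xf K) * (K == k0))) !big_ord_recr big_ord0 /=.
rewrite -!big_distrl /= !sum_eq1 ?xf_lt //.
case: k0 c3 => [|[|[|]]] //= _; lia.
Qed.

Definition Lnat m (r c : nat) := gsym m (r %/ m) (c %/ m) ((r %% m + c %% m) %% m).
Lemma Lnat_lt m (m1 : 1 < m) r c : Lnat m r c < 3 * m.
Proof. by apply: gsym_lt => //; rewrite ltn_pmod //; lia. Qed.
Definition Lsq m (m1 : 1 < m) (r c : 'I_(3 * m)) : 'I_(3 * m) := Ordinal (Lnat_lt m1 r c).

Lemma div3 m (r : 'I_(3 * m)) : 0 < m -> r %/ m < 3.
Proof. by move=> m0; rewrite ltn_divLR // mulnC. Qed.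

Lemma Lsq_latin m (m1 : 1 < m) : latin_square (Lsq m1).
Proof.
have m0 : 0 < m by lia.
split => [r c1 c2 /(congr1 val) /= E | c r1 r2 /(congr1 val) /= E].
  have [eb et] := ginj_row m1 (div3 r m0) (div3 c1 m0) (div3 c2 m0) (ltn_pmod _ m0) (ltn_pmod _ m0) E.
  have : (r %% m + c1 %% m == r %% m + c2 %% m %[mod m]) by rewrite et.
  rewrite eqn_modDl !modn_mod => /eqP ej.
  by apply: val_inj; rewrite /= (divn_eq c1 m) (divn_eq c2 m) eb ej.
have [ea et] := ginj_col m1 (div3 r1 m0) (div3 r2 m0) (div3 c m0) (ltn_pmod _ m0) (ltn_pmod _ m0) E.
have : (c %% m + r1 %% m == c %% m + r2 %% m %[mod m]) by rewrite ![c %% m + _]addnC et.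
rewrite eqn_modDl !modn_mod => /eqP ej.
by apply: val_inj; rewrite /= (divn_eq r1 m) (divn_eq r2 m) ea ej.
Qed.

Lemma Lsq_block m (m1 : 1 < m) a b : a < 3 -> b < 3 -> block_subsquare m (Lsq m1) a b.
Proof.
move=> a3 b3; have m0 : 0 < m by lia.
split.
  pose h (t : 'I_m) : 'I_(3 * m) := Ordinal (@gsym_lt m a b t m1 (ltn_ord t)).
  have -> : [set Lsq m1 rc.1 rc.2 | rc in [set rc : 'I_(3 * m) * 'I_(3 * m) | in_block m a b rc]]
            = [set h t | t in [set: 'I_m]].
    apply/setP => s; apply/imsetP/imsetP => [[rc] | [t _ ->]].
      rewrite inE /in_block => /andP [/eqP ha /eqP hb] ->.
      exists (Ordinal (ltn_pmod (rc.1 %% m + rc.2 %% m) m0)); first by rewrite inE.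
      by apply: val_inj; rewrite /= /Lnat ha hb.
    have lr : a * m + 0 < 3 * m := enc_lt a3 m0.
    have lc : b * m + t < 3 * m := enc_lt b3 (ltn_ord t).
    exists (Ordinal lr, Ordinal lc); first by rewrite inE /in_block /= !divE ?eqxx.
    by apply: val_inj; rewrite /= /Lnat !divE // !modE // add0n modn_small.
  rewrite card_imset ?cardsT ?card_ord //.
  move=> t1 t2 /(congr1 val) /= E.
  have [_ et] := ginj_row m1 a3 b3 b3 (ltn_ord t1) (ltn_ord t2) E.
  exact: val_inj.
move=> s [rc /andP [Hb /eqP hs]]; move: Hb; rewrite /in_block => /andP [/eqP ha /eqP hb].
set t0 := (rc.1 %% m + rc.2 %% m) %% m.
have t0m : t0 < m by rewrite ltn_pmod.
have hsv : val s = gsym m a b t0 by rewrite -hs /= /Lnat ha hb.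
split.
  move=> r hr.
  have lc : b * m + (t0 + (m - r %% m)) %% m < 3 * m := enc_lt b3 (ltn_pmod _ m0).
  exists (Ordinal lc); rewrite /= divE ?ltn_pmod // eqxx /=.
  apply/eqP/val_inj; rewrite hsv /= /Lnat hr divE ?ltn_pmod // modE ?ltn_pmod //.
  congr gsym; rewrite modnDmr.
  have -> : r %% m + (t0 + (m - r %% m)) = t0 + m by have := ltn_pmod r m0; lia.
  by rewrite modnDr modn_small.
move=> c hc.
have lr : a * m + (t0 + (m - c %% m)) %% m < 3 * m := enc_lt a3 (ltn_pmod _ m0).
exists (Ordinal lr); rewrite /= divE ?ltn_pmod // eqxx /=.
apply/eqP/val_inj; rewrite hsv /= /Lnat hc divE ?ltn_pmod // modE ?ltn_pmod //.
congr gsym; rewrite modnDml.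
have -> : t0 + (m - c %% m) + c %% m = t0 + m by have := ltn_pmod c m0; lia.
by rewrite modnDr modn_small.
Qed.

Definition ccf m (r c : nat) := (c %/ m + 2 * (r %/ m)) %% 3.
Definition kkf m (r c : nat) := (r %/ m + c %/ m) %% 3.
Definition Of m (r c : nat) : bool := isO m (Lnat m r c).

Lemma cell_isO m r c : 1 < m -> Of m r c = ((r %% m + c %% m) %% m == xf (ccf m r c)).
Proof. by move=> m1; rewrite /Of /Lnat isO_gsym // ltn_pmod //; lia. Qed.

Lemma cell_div m r c : 1 < m ->
  Lnat m r c %/ m = if Of m r c then kkf m r c else ccf m r c.
Proof. by move=> m1; rewrite cell_isO // /Lnat gsym_div // ltn_pmod //; lia. Qed.

Lemma cell_mod m r c : 1 < m ->
  Lnat m r c %% m = if Of m r c then xf (kkf m r c) else (r %% m + c %% m) %% m.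
Proof. by move=> m1; rewrite cell_isO // /Lnat gsym_mod // ltn_pmod //; lia. Qed.

Lemma I1 m r c : 1 < m ->
  Lnat m r c %/ m + Of m r c * ccf m r c = ccf m r c + Of m r c * kkf m r c.
Proof. by move=> m1; rewrite cell_div //; case: (Of m r c) => /=; lia. Qed.

Lemma I2 m r c : 1 < m ->
  (Lnat m r c %% m + Of m r c * xf (ccf m r c)) %% m
  = (r %% m + c %% m + Of m r c * xf (kkf m r c)) %% m.
Proof.
move=> m1; rewrite cell_mod //; case E: (Of m r c); rewrite /= ?mul1n ?mul0n ?addn0 ?modn_mod //.
move: E; rewrite cell_isO // => /eqP E.
by rewrite -(modnDml (r %% m + c %% m)) E addnC.
Qed.

Lemma I3 m r c (G : nat -> nat) : 1 < m ->
  Of m r c * G (kkf m r c) = Of m r c * G (Lnat m r c %/ m).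
Proof. by move=> m1; rewrite cell_div //; case: (Of m r c). Qed.

Lemma I5 m r c (G : nat -> nat) : 1 < m ->
  (~~ Of m r c) * G (ccf m r c) = (~~ Of m r c) * G (Lnat m r c %/ m).
Proof. by move=> m1; rewrite cell_div //; case: (Of m r c). Qed.

Definition tb m (T : {set 'I_(3 * m) * 'I_(3 * m)}) (i j : nat) :=
  \sum_(x in T) ((x.1 %/ m == i) && (x.2 %/ m == j)).
Arguments tb : simpl never.

Lemma expand m (T : {set 'I_(3 * m) * 'I_(3 * m)}) (P : nat -> nat -> nat) : 0 < m ->
  \sum_(x in T) P (x.1 %/ m) (x.2 %/ m) = \sum_(i < 3) \sum_(j < 3) P i j * tb T i j.
Proof.
move=> m0.
transitivity (\sum_(x in T) \sum_(i < 3) \sum_(j < 3) P i j * ((x.1 %/ m == i) && (x.2 %/ m == j))).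
  apply: eq_bigr => x _.
  have := div3 x.1 m0; have := div3 x.2 m0.
  case: (x.2 %/ m) => [|[|[|]]] //; case: (x.1 %/ m) => [|[|[|]]] // _ _;
    rewrite !big_ord_recr !big_ord0 /=; lia.
rewrite exchange_big; apply: eq_bigr => i _.
rewrite exchange_big; apply: eq_bigr => j _.
by rewrite /tb big_distrr.
Qed.

Lemma expand9 m (T : {set 'I_(3 * m) * 'I_(3 * m)}) (P : nat -> nat -> nat) : 0 < m ->
  \sum_(x in T) P (x.1 %/ m) (x.2 %/ m) =
  P 0 0 * tb T 0 0 + P 0 1 * tb T 0 1 + P 0 2 * tb T 0 2 +
  P 1 0 * tb T 1 0 + P 1 1 * tb T 1 1 + P 1 2 * tb T 1 2 +
  P 2 0 * tb T 2 0 + P 2 1 * tb T 2 1 + P 2 2 * tb T 2 2.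
Proof. by move=> m0; rewrite expand // !big_ord_recr !big_ord0 /=; lia. Qed.

Lemma Lsq_trans m (m1 : 1 < m) (m3 : 3 <= m) (om : odd m) (T : {set 'I_(3 * m) * 'I_(3 * m)}) :
  latin_transversal (Lsq m1) T -> forall a b : nat, a < 3 -> b < 3 ->
  exists rc : 'I_(3 * m) * 'I_(3 * m), (rc \in T) && in_block m a b rc.
Proof.
move=> [_ [rowU [colU symU]]] a b a3 b3.
have m0 : 0 < m by lia.
have Ur : forall r : 'I_(3 * m), exists! x, (x \in T) && (x.1 == r).
  move=> r; have [c [Hc Uc]] := rowU r; exists (r, c); split; first by rewrite Hc eqxx.
  by move=> [r' c'] /andP [H /eqP /= er]; subst r'; rewrite (Uc c' H).
have Uc : forall c : 'I_(3 * m), exists! x, (x \in T) && (x.2 == c).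
  move=> c; have [r [Hr Ur']] := colU c; exists (r, c); split; first by rewrite Hr eqxx.
  by move=> [r' c'] /andP [H /eqP /= er]; subst c'; rewrite (Ur' r' H).
have sR : forall G : nat -> nat, \sum_(x in T) G x.1 = \sum_(v < 3 * m) G v.
  by move=> G; exact: (sum_T_fun (fun v : 'I_(3 * m) => G v) Ur).
have sC : forall G : nat -> nat, \sum_(x in T) G x.2 = \sum_(v < 3 * m) G v.
  by move=> G; exact: (sum_T_fun (fun v : 'I_(3 * m) => G v) Uc).
have sS : forall G : nat -> nat, \sum_(x in T) G (Lnat m x.1 x.2) = \sum_(v < 3 * m) G v.
  by move=> G; exact: (sum_T_fun (fun v : 'I_(3 * m) => G v) symU).
pose z c0 := \sum_(x in T) Of m x.1 x.2 * (ccf m x.1 x.2 == c0).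
have Zs : z 0 + z 1 + z 2 = 3.
  rewrite /z -!big_split /=.
  transitivity (\sum_(x in T) isO m (Lnat m x.1 x.2)); last exact: etrans (sS (isO m)) (s_d m1).
  apply: eq_bigr => x _; rewrite /Of.
  have : ccf m x.1 x.2 < 3 by rewrite ltn_mod.
  by case: (ccf _ _ _) => [|[|[|]]] // _; case: (isO _ _).
have Zm3 : (z 1 + 2 * z 2) %% 3 = 0.
  have X : \sum_(x in T) Of m x.1 x.2 * ccf m x.1 x.2 = z 1 + 2 * z 2.
    rewrite /z big_distrr -big_split /=; apply: eq_bigr => x _.
    have : ccf m x.1 x.2 < 3 by rewrite ltn_mod.
    by case: (ccf _ _ _) => [|[|[|]]] // _; case: (Of _ _ _).
  have H1 : \sum_(x in T) (Lnat m x.1 x.2 %/ m + Of m x.1 x.2 * ccf m x.1 x.2)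
          = \sum_(x in T) (ccf m x.1 x.2 + Of m x.1 x.2 * kkf m x.1 x.2).
    by apply: eq_bigr => x _; rewrite I1.
  rewrite !big_split /= in H1.
  have H2 : \sum_(x in T) Lnat m x.1 x.2 %/ m = 3 * m := etrans (sS (fun v => v %/ m)) (s_c m).
  have H3 : \sum_(x in T) Of m x.1 x.2 * kkf m x.1 x.2 = 3.
    transitivity (\sum_(x in T) isO m (Lnat m x.1 x.2) * (Lnat m x.1 x.2 %/ m)).
      by apply: eq_bigr => x _; exact: (@I3 m x.1 x.2 id m1).
    exact: (etrans (sS (fun v => isO m v * (v %/ m))) (s_e m1)).
  have HR : \sum_(x in T) x.1 %/ m = 3 * m := etrans (sR (fun v => v %/ m)) (s_c m).
  have HC : \sum_(x in T) x.2 %/ m = 3 * m := etrans (sC (fun v => v %/ m)) (s_c m).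
  have H4 : \sum_(x in T) ccf m x.1 x.2 = 0 %[mod 3].
    rewrite /ccf modn_summ big_split /= -big_distrr /= HR HC; lia.
  rewrite H2 H3 X in H1. move: H4 H1. clear. move: (z 1) (z 2) (\sum_(x in T) ccf m x.1 x.2) => p q s. lia.
have Z2 : z 2 = 1.
  have E : (\sum_(x in T) (Lnat m x.1 x.2 %% m + Of m x.1 x.2 * xf (ccf m x.1 x.2))) %% m
         = (\sum_(x in T) (x.1 %% m + x.2 %% m + Of m x.1 x.2 * xf (kkf m x.1 x.2))) %% m.
    rewrite -modn_summ; symmetry; rewrite -modn_summ; symmetry; congr (_ %% m).
    by apply: eq_bigr => x _; exact: I2.
  rewrite !big_split /= in E.
  have HL0 : \sum_(x in T) Lnat m x.1 x.2 %% m = 0 %[mod m].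
    by rewrite -(s_b om); congr (_ %% m); exact: (sS (fun v => v %% m)).
  have HR0 : \sum_(x in T) x.1 %% m = 0 %[mod m].
    by rewrite -(s_b om); congr (_ %% m); exact: (sR (fun v => v %% m)).
  have HC0 : \sum_(x in T) x.2 %% m = 0 %[mod m].
    by rewrite -(s_b om); congr (_ %% m); exact: (sC (fun v => v %% m)).
  have HK : \sum_(x in T) Of m x.1 x.2 * xf (kkf m x.1 x.2) = 1.
    transitivity (\sum_(x in T) isO m (Lnat m x.1 x.2) * xf (Lnat m x.1 x.2 %/ m)).
      by apply: eq_bigr => x _; exact: (@I3 m x.1 x.2 xf m1).
    exact: (etrans (sS (fun v => isO m v * xf (v %/ m))) (s_f m1)).
  have Hz : \sum_(x in T) Of m x.1 x.2 * xf (ccf m x.1 x.2) = z 2 := erefl.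
  rewrite Hz HK in E.
  move: E HL0 HR0 HC0.
  move: (\sum_(x in T) Lnat m x.1 x.2 %% m) (\sum_(x in T) x.1 %% m) (\sum_(x in T) x.2 %% m) => s0 s1 s2.
  rewrite !mod0n => E e0 e1 e2.
  rewrite (divn_eq s0 m) (divn_eq s1 m) (divn_eq s2 m) e0 e1 e2 !addn0 -addnA modnMDl in E.
  rewrite addnA -mulnDl modnMDl (modn_small m1) in E.
  have : z 2 <= 3 by move: Zs; clear; move: (z 0) (z 1) (z 2) => p q r; lia.
  move: E; clear -m1 m3; move: (z 2) => w.
  case: w => [|[|[|[|w]]]] //.
  - by rewrite mod0n.
  - by rewrite modn_small.
  - move=> E _; move: E; case: (ltngtP m 3) => h.
    + lia.
    + by rewrite modn_small.
    + by rewrite h.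
have Z1 : z 1 = 1 by move: Zs Zm3 Z2; clear; move: (z 0) (z 1) (z 2) => p q r; lia.
have Z0 : z 0 = 1 by move: Zs Z1 Z2; clear; move: (z 0) (z 1) (z 2) => p q r; lia.
have D : forall c0, c0 < 3 -> \sum_(x in T) (ccf m x.1 x.2 == c0) = m.
  move=> c0 c3.
  have -> : \sum_(x in T) (ccf m x.1 x.2 == c0)
          = \sum_(x in T) ((~~ Of m x.1 x.2) * (ccf m x.1 x.2 == c0)) + z c0.
    by rewrite /z -big_split; apply: eq_bigr => x _; case: (Of _ _ _); case: (_ == _).
  have -> : \sum_(x in T) ((~~ Of m x.1 x.2) * (ccf m x.1 x.2 == c0)) = m.-1.
    transitivity (\sum_(x in T) (~~ isO m (Lnat m x.1 x.2)) * (Lnat m x.1 x.2 %/ m == c0)).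
      by apply: eq_bigr => x _; exact: (@I5 m x.1 x.2 (fun v => (v == c0) : nat) m1).
    exact: etrans (sS (fun v => (~~ isO m v) * (v %/ m == c0))) (s_g m1 c3).
  have -> : z c0 = 1 by case: c0 c3 => [|[|[|]]].
  lia.
have K : forall k0, k0 < 3 -> 0 < \sum_(x in T) (kkf m x.1 x.2 == k0).
  move=> k0 k3.
  have H : \sum_(x in T) Of m x.1 x.2 * (kkf m x.1 x.2 == k0) = 1.
    transitivity (\sum_(x in T) isO m (Lnat m x.1 x.2) * (Lnat m x.1 x.2 %/ m == k0)).
      by apply: eq_bigr => x _; exact: (@I3 m x.1 x.2 (fun v => (v == k0) : nat) m1).
    exact: etrans (sS (fun v => isO m v * (v %/ m == k0))) (s_h m1 k3).
  have : \sum_(x in T) Of m x.1 x.2 * (kkf m x.1 x.2 == k0) <= \sum_(x in T) (kkf m x.1 x.2 == k0).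
    by apply: leq_sum => x _; case: (Of _ _ _); rewrite ?mul1n ?mul0n.
  by rewrite H.
have R : forall a0, a0 < 3 -> \sum_(x in T) (x.1 %/ m == a0) = m.
  by move=> a0 h; exact: etrans (sR (fun v => (v %/ m == a0) : nat)) (@s_a m a0 h).
have C : forall b0, b0 < 3 -> \sum_(x in T) (x.2 %/ m == b0) = m.
  by move=> b0 h; exact: etrans (sC (fun v => (v %/ m == b0) : nat)) (@s_a m b0 h).
case: (boolP [exists rc, (rc \in T) && in_block m a b rc]) => [/existsP // | /existsPn H0].
exfalso.
have Z : tb T a b = 0.
  apply: big1 => x xT; move: (H0 x); rewrite xT /in_block /=.
  by case: (_ && _).
have R0 := R 0 erefl; have R1 := R 1 erefl; have R2 := R 2 erefl.
have C0 := C 0 erefl; have C1 := C 1 erefl; have C2 := C 2 erefl.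
have D0 := D 0 erefl; have D1 := D 1 erefl; have D2 := D 2 erefl.
have K0 := K ((a + b) %% 3) (ltn_mod _ _).
rewrite (expand9 T (fun i _ => (i == 0) : nat) m0) /= in R0.
rewrite (expand9 T (fun i _ => (i == 1) : nat) m0) /= in R1.
rewrite (expand9 T (fun i _ => (i == 2) : nat) m0) /= in R2.
rewrite (expand9 T (fun _ j => (j == 0) : nat) m0) /= in C0.
rewrite (expand9 T (fun _ j => (j == 1) : nat) m0) /= in C1.
rewrite (expand9 T (fun _ j => (j == 2) : nat) m0) /= in C2.
rewrite /ccf (expand9 T (fun i j => ((j + 2 * i) %% 3 == 0) : nat) m0) /= in D0.
rewrite /ccf (expand9 T (fun i j => ((j + 2 * i) %% 3 == 1) : nat) m0) /= in D1.
rewrite /ccf (expand9 T (fun i j => ((j + 2 * i) %% 3 == 2) : nat) m0) /= in D2.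
rewrite /kkf (expand9 T (fun i j => ((i + j) %% 3 == (a + b) %% 3) : nat) m0) in K0.
move: Z R0 R1 R2 C0 C1 C2 D0 D1 D2 K0.
clear -a3 b3.
case: a a3 => [|[|[|]]] // _; case: b b3 => [|[|[|]]] // _ /=;
move: (tb T 0 0) (tb T 0 1) (tb T 0 2) (tb T 1 0) (tb T 1 1) (tb T 1 2) (tb T 2 0) (tb T 2 1) (tb T 2 2);
lia.
Qed.

Unset Implicit Arguments.

Theorem theorem3 (m : nat) (hm : 3 <= m) (hodd : odd m) :
  exists L : 'I_(3 * m) -> 'I_(3 * m) -> 'I_(3 * m),
    latin_square L /\
    (forall a b : nat, a < 3 -> b < 3 -> block_subsquare m L a b) /\
    (forall T : {set 'I_(3 * m) * 'I_(3 * m)}, latin_transversal L T ->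
       forall a b : nat, a < 3 -> b < 3 ->
         exists rc : 'I_(3 * m) * 'I_(3 * m), (rc \in T) && in_block m a b rc).
Proof.
have m1 : 1 < m by apply: leq_trans hm.
exists (Lsq m1); split; first exact: Lsq_latin.
split; first by move=> a b a3 b3; exact: Lsq_block.
by move=> T hT; exact: (@Lsq_trans m m1 hm hodd T hT).
Qed.
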